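(* Let $g$ be a non-negative integer and let $G$ be a connected graph of order $n$ which has a $g$-good-neighbor cut. Then $$0\leq g\leq \min\left\{\Delta(G),\left\lfloor \frac{n-3}{2}\right\rfloor\right\}$$ and $$e(G)\leq {n\choose 2}-(g+1)^2.$$
   Context: For a connected graph $G=(V,E)$ and integer $g\ge0$: a set $F\subseteq V$ is a $g$-good-neighbor faulty set if $|N(v)\cap (V-F)|\geq g$ for every $v\in V-F$; a $g$-good-neighbor cut is such an $F$ with $G-F$ disconnected. $e(G)$ is the number of edges and $\Delta(G)$ the maximum degree. *)

(* Defs.v *)
From mathcomp Require Import all_boot.
Set Implicit Arguments. Unset Strict Implicit. Unset Printing Implicit Defensive.

Definition simple_graph (T : finType) (e : rel T) : Prop :=
  symmetric e /\ irreflexive e.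

Definition nbhd (T : finType) (e : rel T) (v : T) : {set T} := [set u | e v u].

Definition connected_graph (T : finType) (e : rel T) : Prop :=
  forall x y : T, connect e x y.

Definition del_rel (T : finType) (e : rel T) (F : {set T}) : rel T :=
  [rel x y | [&& e x y, x \notin F & y \notin F]].

Definition disconnected_after (T : finType) (e : rel T) (F : {set T}) : Prop :=
  exists x y : T, [/\ x \notin F, y \notin F & ~~ connect (del_rel e F) x y].

Definition good_neighbor_faulty (T : finType) (e : rel T) (g : nat) (F : {set T}) : Prop :=
  forall v : T, v \notin F -> g <= #|nbhd e v :&: ~: F|.

Definition good_neighbor_cut (T : finType) (e : rel T) (g : nat) (F : {set T}) : Prop :=
  good_neighbor_faulty e g F /\ disconnected_after e F.

Definition max_degree (T : finType) (e : rel T) : nat := \max_(v : T) #|nbhd e v|.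

Definition num_edges (T : finType) (e : rel T) : nat :=
  #|[set A : {set T} | [exists x, exists y, e x y && (A == [set x; y])]]|.

(* Main.v *)
Require Import Defs.
From mathcomp Require Import all_boot.
From mathcomp Require Import zify.

Lemma comp_notF (T : finType) (e : rel T) (F : {set T}) x z :
  connect (del_rel e F) x z -> x \notin F -> z \notin F.
Proof.
case/connectP => p; elim: p x => [|a p IH] x /=; first by move=> _ ->.
move=> /andP[/and3P[_ _ Ha] Hp] zl _; exact: IH Hp zl Ha.
Qed.

Lemma comp_size (T : finType) (e : rel T) (g : nat) (F : {set T}) x :
  irreflexive e -> good_neighbor_faulty e g F -> x \notin F ->
  g.+1 <= #|[set z | connect (del_rel e F) x z]|.
Proof.
move=> irr gn xF.
have sub : x |: (nbhd e x :&: ~: F) \subset [set z | connect (del_rel e F) x z].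
  apply/subsetP => z; rewrite /nbhd !inE => /orP[/eqP -> | /andP[exz zF]].
    exact: connect0.
  by apply: connect1; rewrite /del_rel /= exz xF.
apply: leq_trans (subset_leq_card sub).
rewrite cardsU1 /nbhd !inE irr /=; exact: gn.
Qed.

Theorem proposition1p1 (T : finType) (e : rel T) (g : nat) :
  simple_graph e -> connected_graph e ->
  (exists F : {set T}, good_neighbor_cut e g F) ->
  [/\ 0 <= g, g <= minn (max_degree e) ((#|T| - 3) %/ 2)
    & num_edges e + (g + 1) ^ 2 <= 'C(#|T|, 2)].
Proof.
move=> [sym irr] conn [F [gn [x [y [xF yF nxy]]]]].
set r := del_rel e F.
have symr : symmetric r.
  by move=> a b; rewrite /r /del_rel /= sym; case: (e b a); rewrite //= andbC.
set C := [set z | connect r x z].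
set D := [set z | connect r y z].
have Cs := @comp_size _ _ _ _ _ irr gn xF; have Ds := @comp_size _ _ _ _ _ irr gn yF.
rewrite -/r -/C in Cs; rewrite -/r -/D in Ds.
have CF : forall z, z \in C -> z \notin F by move=> z; rewrite inE => h; exact: (@comp_notF _ _ _ _ _ h xF).
have DF : forall z, z \in D -> z \notin F by move=> z; rewrite inE => h; exact: (@comp_notF _ _ _ _ _ h yF).
have CD : forall z, z \in C -> z \in D -> False.
  move=> z; rewrite !inE => cz dz; move/negP: nxy; apply.
  apply: connect_trans cz _; by rewrite (sym_connect_sym symr).
have Fn0 : 0 < #|F|.
  rewrite card_gt0; apply/negP => /eqP F0; move/negP: nxy; apply.
  have h : del_rel e F =2 e by move=> a b; rewrite /del_rel /= F0 !inE !andbT.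
  rewrite (eq_connect h); exact: conn.
have CDsub : C :|: D \subset ~: F.
  apply/subsetP => z /setUP[zC | zD]; rewrite inE; [exact: CF | exact: DF].
have CDI : C :&: D = set0.
  apply/setP => z; rewrite in_set0; apply/negP => /setIP[a b]; exact: CD a b.
have size1 : #|C| + #|D| + 1 <= #|T|.
  have := subset_leq_card CDsub; rewrite cardsU CDI cards0 subn0.
  have := cardsC F; lia.
have gD : g <= max_degree e.
  apply: leq_trans (gn x xF) _; rewrite /max_degree.
  have hb := @leq_bigmax _ (fun v => #|nbhd e v|) x; apply: leq_trans _ hb.
  by apply: subset_leq_card; apply: subsetIl.
split => //.
  rewrite leq_min gD /= leq_divRL //; set n := #|T| in size1 *; lia.
set E := [set A : {set T} | [exists x, exists y, e x y && (A == [set x; y])]].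
set P2 := [set A : {set T} | #|A| == 2].
set B := [set [set p.1; p.2] | p in setX C D].
have EP : E \subset P2.
  apply/subsetP => A; rewrite !inE => /existsP[a /existsP[b /andP[eab /eqP ->]]].
  rewrite cards2; case: (eqVneq a b) => [ab|//]; by rewrite ab irr in eab.
have BP : B \subset P2.
  apply/subsetP => A /imsetP[[c d]]; rewrite inE /= => /andP[cC dD] ->.
  rewrite inE cards2; case: (eqVneq c d) => [cd|//]; rewrite cd in cC; case: (CD _ cC dD).
have EB : E :&: B = set0.
  apply/setP => A; rewrite !inE; apply/negP => /andP[].
  move=> /existsP[a /existsP[b /andP[eab /eqP ->]]] /imsetP[[c d]].
  rewrite inE /= => /andP[cC dD] eq.
  have ecd : e c d.
    have ab : a != b by apply/eqP => ab; rewrite ab irr in eab.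
    have : a \in [set c; d] by rewrite -eq !inE eqxx.
    have : b \in [set c; d] by rewrite -eq !inE eqxx orbT.
    rewrite !inE => /orP[/eqP bc | /eqP bd] /orP[/eqP ac | /eqP ad].
    - by rewrite ac bc eqxx in ab.
    - by rewrite -bc -ad sym.
    - by rewrite -ac -bd.
    - by rewrite ad bd eqxx in ab.
  have rcd : r c d by rewrite /r /del_rel /= ecd (CF c cC) (DF d dD).
  have dC : d \in C.
    rewrite inE; apply: connect_trans (_ : connect r x c) (connect1 rcd).
    by move: cC; rewrite inE.
  exact: CD dC dD.
have cardB : #|B| = #|C| * #|D|.
  rewrite card_in_imset ?cardsX //.
  move=> [c d] [c' d'] /setXP[cC dD] /setXP[cC' dD'] /= eq.
  have cin : c \in [set c'; d'] by rewrite -eq !inE eqxx.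
  have din : d \in [set c'; d'] by rewrite -eq !inE eqxx orbT.
  move: cin din; rewrite !inE => /orP[/eqP -> | /eqP cd'] /orP[/eqP dc' | /eqP ->] //.
  - by rewrite dc' in dD; case: (CD _ cC' dD).
  - by rewrite cd' in cC; case: (CD _ cC dD').
  - by rewrite cd' in cC; case: (CD _ cC dD').
have : #|E :|: B| <= #|P2| by apply: subset_leq_card; rewrite subUset EP BP.
rewrite cardsU EB cards0 subn0 cardB card_draws /num_edges -/E => h.
apply: leq_trans h; rewrite leq_add2l addn1 expnS expn1.
by apply: leq_mul.
Qed.
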